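(* Let $k,s$ be positive integers and suppose that $K_{k+1,s}$ admits a balanced $k$-page embedding. Let $n\ge s$ be an integer and $q:=n\bmod s$. Then \[ \nu_k(K_{k+1,n}) \le q\binom{\frac{n-q}{s}+1}{2} + (s-q)\binom{\frac{n-q}{s}}{2}. \]
   Context: A book with $k$ pages consists of a line (the spine) and $k$ half-planes (the pages) whose common boundary is the spine. A $k$-page drawing of a graph places all vertices on the spine and draws each edge inside a single page; a $k$-page embedding is one without crossings. $\nu_k(G)$ is the minimum number of crossings over all $k$-page drawings of $G$. In $K_{k+1,s}$, call the $k+1$ vertices of degree $s$ black and the $s$ vertices of degree $k+1$ white. In a $k$-page embedding, the load of a white vertex $v$ in a page is the number of edges incident with $v$ drawn in that page. A $k$-page embedding of $K_{k+1,s}$ is balanced if every white vertex has load exactly $1$ in $k-1$ of the pages (hence load $2$ in the remaining page). Convention: $\binom{a}{b}=0$ whenever $a<b$. *)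

(* Defs.v *)
From mathcomp Require Import all_boot.
Set Implicit Arguments. Unset Strict Implicit. Unset Printing Implicit Defensive.

(* K_{m,n}: black vertices 'I_m, white vertices 'I_n; vertex type 'I_m + 'I_n;
   edges are pairs (i, j) : 'I_m * 'I_n joining inl i and inr j. *)

Record bdrawing (k m n : nat) := BDrawing {
  pos : 'I_m + 'I_n -> nat;
  pos_inj : injective pos;
  page : 'I_m * 'I_n -> 'I_k
}.

Section Drawings.
Variables (k m n : nat) (D : bdrawing k m n).

Definition lend (e : 'I_m * 'I_n) : nat :=
  minn (pos D (inl e.1)) (pos D (inr e.2)).
Definition rend (e : 'I_m * 'I_n) : nat :=
  maxn (pos D (inl e.1)) (pos D (inr e.2)).

(* Edges e and f (same page) cross, with e starting first:
   their endpoints interleave  lend e < lend f < rend e < rend f.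
   Every crossing pair is thus counted exactly once (as an ordered pair). *)
Definition crosses (e f : 'I_m * 'I_n) : bool :=
  [&& page D e == page D f, lend e < lend f, lend f < rend e & rend e < rend f].

Definition crossings : nat :=
  #|[set p : ('I_m * 'I_n) * ('I_m * 'I_n) | crosses p.1 p.2]|.

Definition load (v : 'I_n) (p : 'I_k) : nat :=
  #|[set i : 'I_m | page D (i, v) == p]|.

End Drawings.

Definition balanced_embedding (k s : nat) (D : bdrawing k k.+1 s) : Prop :=
  crossings D = 0 /\
  forall v : 'I_s, #|[set p : 'I_k | load D v p == 1]| = k - 1.

(* Main.v *)
Require Import Defs.
From mathcomp Require Import zify.
From mathcomp Require Import all_boot.
Set Implicit Arguments. Unset Strict Implicit. Unset Printing Implicit Defensive.

Section Constr.
Variables (k s n : nat) (D0 : bdrawing k k.+1 s).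
Hypothesis s0 : 0 < s.
Hypothesis Hcr : crossings D0 = 0.
Hypothesis Hbal : forall v : 'I_s, #|[set p : 'I_k | load D0 v p == 1]| = k - 1.

Definition fw (j : 'I_n) : 'I_s := Ordinal (ltn_pmod j s0).
Definition orig (x : 'I_k.+1 + 'I_n) : 'I_k.+1 + 'I_s :=
  match x with inl i => inl i | inr j => inr (fw j) end.
Definition off (x : 'I_k.+1 + 'I_n) : nat := match x with inl _ => 0 | inr j => nat_of_ord j end.
Definition posn x := pos D0 (orig x) * n.+1 + off x.

Lemma off_lt x : off x < n.+1.
Proof. case: x => [i|j] //=; have := ltn_ord j; lia. Qed.

Lemma posn_inj : injective posn.
Proof.
move=> x y H.
have Hd : pos D0 (orig x) = pos D0 (orig y).
  have := congr1 (fun t => t %/ n.+1) H.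
  by rewrite /posn !divnMDl // !divn_small ?off_lt // !addn0.
have Ho : off x = off y.
  have := congr1 (fun t => t %% n.+1) H.
  by rewrite /posn !modnMDl !modn_small ?off_lt.
have := pos_inj Hd.
case: x y Ho {H Hd} => [i|j] [i'|j'] //=; first by move=> _ [->].
by move=> /val_inj ->.
Qed.

Definition pagen (e : 'I_k.+1 * 'I_n) : 'I_k := page D0 (e.1, fw e.2).
Definition Dn := BDrawing posn_inj pagen.

Lemma posn_lt x y : pos D0 (orig x) < pos D0 (orig y) -> posn x < posn y.
Proof. rewrite /posn => H; have := off_lt x; have := off_lt y; nia. Qed.

Lemma posn_ltE x y : orig x != orig y ->
  (posn x < posn y) = (pos D0 (orig x) < pos D0 (orig y)).
Proof.
move=> Hne; case: (ltngtP (pos D0 (orig x)) (pos D0 (orig y))) => H.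
- by rewrite posn_lt.
- by apply/negbTE; rewrite -leqNgt ltnW // posn_lt.
- by move/pos_inj: H => H; rewrite H eqxx in Hne.
Qed.


Lemma transfer (a b c d A B C D : nat) :
  a <> b -> a <> c -> a <> d -> b <> c -> b <> d -> c <> d ->
  (A < B) = (a < b) -> (A < C) = (a < c) -> (A < D) = (a < d) ->
  (B < C) = (b < c) -> (B < D) = (b < d) -> (C < D) = (c < d) ->
  (B < A) = (b < a) -> (C < A) = (c < a) -> (D < A) = (d < a) ->
  (C < B) = (c < b) -> (D < B) = (d < b) -> (D < C) = (d < c) ->
  minn A B < minn C D -> minn C D < maxn A B -> maxn A B < maxn C D ->
  [&& minn a b < minn c d, minn c d < maxn a b & maxn a b < maxn c d].
Proof. lia. Qed.

Lemma Pne x y : orig x != orig y -> pos D0 (orig x) <> pos D0 (orig y).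
Proof. by move=> H E; move/pos_inj: E => E; rewrite E eqxx in H. Qed.

Lemma cross_props (e f : 'I_k.+1 * 'I_n) : crosses Dn e f ->
  [/\ fw e.2 = fw f.2, e.1 != f.1, e.2 != f.2 & page D0 (e.1, fw e.2) = page D0 (f.1, fw e.2)].
Proof.
case: e f => [a j] [c j']; rewrite /crosses /lend /rend /= => /and4P [/eqP Hp H1 H2 H3].
have Hac : a != c by apply/eqP => E; subst c; lia.
have Hjj : j != j' by apply/eqP => E; subst j'; lia.
have Hg : fw j = fw j'.
  apply/eqP; apply/negPn/negP => Hne.
  have Hc : crosses D0 (a, fw j) (c, fw j').
    rewrite /crosses /lend /rend /= /pagen /= in Hp *; rewrite Hp eqxx /=.
    have E := fun x y (h : orig x != orig y) => posn_ltE h.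
    have N := fun x y (h : orig x != orig y) => Pne h.
    apply: (transfer (A := posn (inl a)) (B := posn (inr j))
                     (C := posn (inl c)) (D := posn (inr j'))) => //;
      first [ exact: (N (inl a) (inr j)) | exact: (N (inl a) (inl c))
            | exact: (N (inl a) (inr j')) | exact: (N (inr j) (inl c))
            | exact: (N (inr j) (inr j')) | exact: (N (inl c) (inr j'))
            | exact: (E (inl a) (inr j)) | exact: (E (inl a) (inl c))
            | exact: (E (inl a) (inr j')) | exact: (E (inr j) (inl c))
            | exact: (E (inr j) (inr j')) | exact: (E (inl c) (inr j'))
            | exact: (E (inr j) (inl a)) | exact: (E (inl c) (inl a))
            | exact: (E (inr j') (inl a)) | exact: (E (inl c) (inr j))
            | exact: (E (inr j') (inr j)) | exact: (E (inr j') (inl c)) | (apply: E; rewrite /= eq_sym; assumption) ].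
  have mem : ((a, fw j), (c, fw j')) \in [set p | crosses D0 p.1 p.2] by rewrite inE; exact: Hc.
  by rewrite (cards0_eq Hcr) inE in mem.
by split => //; rewrite {2}Hg.
Qed.

Lemma sum_load v : \sum_(p : 'I_k) load D0 v p = k.+1.
Proof.
rewrite /load (eq_bigr (fun p => \sum_(i : 'I_k.+1) ((page D0 (i, v) == p) : nat))); last first.
  move=> p _; rewrite -sum1_card big_mkcond /=; apply: eq_bigr => i _.
  by rewrite inE; case: eqP.
rewrite exchange_big /= (eq_bigr (fun _ => 1)); last first.
  move=> i _; rewrite (bigD1 (page D0 (i, v))) //= eqxx big1 // => p /negbTE.
  by rewrite eq_sym => ->.
by rewrite sum_nat_const card_ord muln1.
Qed.

Lemma bal_pair (v : 'I_s) (i1 i2 i1' i2' : 'I_k.+1) : i1 != i2 ->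
  page D0 (i1, v) = page D0 (i2, v) -> i1' != i2' ->
  page D0 (i1', v) = page D0 (i2', v) -> i1' \in [set i1; i2].
Proof.
move=> H12 E12 H12' E12'.
set p := page D0 (i1, v); set p' := page D0 (i1', v).
have sub : [set i1; i2] \subset [set i | page D0 (i, v) == p].
  by apply/subsetP => i; rewrite !inE => /orP [] /eqP ->; apply/eqP; rewrite // -E12.
have sub' : [set i1'; i2'] \subset [set i | page D0 (i, v) == p'].
  by apply/subsetP => i; rewrite !inE => /orP [] /eqP ->; apply/eqP; rewrite // -E12'.
have Lp : 2 <= load D0 v p by have := subset_leq_card sub; rewrite cards2 H12.
have Lp' : 2 <= load D0 v p' by have := subset_leq_card sub'; rewrite cards2 H12'.
have Hs := sum_load v.
rewrite (bigID (fun p => load D0 v p == 1)) /= in Hs.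
rewrite (eq_bigr (fun _ => 1)) in Hs; last by move=> q /eqP.
rewrite sum1dep_card in Hs.
rewrite Hbal in Hs.
have k0 : 0 < k by apply: leq_ltn_trans (ltn_ord p).
rewrite (bigD1 p) /= in Hs; last by rewrite neq_ltn Lp orbT.
have pp : p' = p.
  apply/eqP; apply/negPn/negP => ne.
  rewrite (bigD1 p') /= in Hs; last by rewrite ne neq_ltn Lp' orbT.
  lia.
have L2 : load D0 v p <= 2 by lia.
have := subset_leqif_cards sub; rewrite cards2 H12.
move=> [_ E]; have /eqP EA : [set i1; i2] == [set i | page D0 (i, v) == p].
  by rewrite -E; rewrite /load in L2 Lp; rewrite eqn_leq Lp L2.
by rewrite EA inE -/p' pp.
Qed.

Lemma cross_uniq e f e' f' : crosses Dn e f -> crosses Dn e' f' ->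
  [set e.2; f.2] = [set e'.2; f'.2] -> (e, f) = (e', f').
Proof.
move=> C1 C2 Es.
have [g1 ac j12 pg] := cross_props C1.
have [g1' ac' j12' pg'] := cross_props C2.
move: C1 C2 Es g1 ac j12 pg g1' ac' j12' pg'.
case: e f e' f' => [a j1] [c j2] [a' j1'] [c' j2'] /=.
rewrite /crosses /lend /rend /= => /and4P [_ H1 H2 H3] /and4P [_ H1' H2' H3'].
move=> Es g1 ac j12 pg g1' ac' j12' pg'.
have m1 : j1' \in [set j1; j2] by rewrite Es !inE eqxx.
have m2 : j2' \in [set j1; j2] by rewrite Es !inE eqxx orbT.
have gv : fw j1' = fw j1 by case/set2P: m1 => ->.
rewrite gv in pg'.
have ma : a' \in [set a; c] := bal_pair ac pg ac' pg'.
have mc : c' \in [set a; c] by apply: (bal_pair ac pg); [rewrite eq_sym; exact: ac' | exact: esym pg'].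
have B1 : (posn (inl a) < posn (inr j1)) = (posn (inl a) < posn (inr j2)).
  by rewrite !posn_ltE //= g1.
have B2 : (posn (inl c) < posn (inr j1)) = (posn (inl c) < posn (inr j2)).
  by rewrite !posn_ltE //= g1.
have d1 : posn (inl a) <> posn (inl c) by move=> /posn_inj [] E; rewrite E eqxx in ac.
have d2 : posn (inr j1) <> posn (inr j2) by move=> /posn_inj [] E; rewrite E eqxx in j12.
have d3 : posn (inl a) <> posn (inr j1) by move=> /posn_inj.
have d4 : posn (inl a) <> posn (inr j2) by move=> /posn_inj.
have d5 : posn (inl c) <> posn (inr j1) by move=> /posn_inj.
have d6 : posn (inl c) <> posn (inr j2) by move=> /posn_inj.
case/set2P: ma => E1; subst a'; case/set2P: mc => E2; subst c';
  try (by rewrite eqxx in ac');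
case/set2P: m1 => E3; subst j1'; case/set2P: m2 => E4; subst j2';
  try (by rewrite eqxx in j12'); try reflexivity; exfalso; lia.
Qed.

Definition SS N := \sum_(a < N) a %/ s.

Lemma SS_step N : SS N.+1 = SS N + N %/ s.
Proof. by rewrite /SS big_ord_recr. Qed.

Lemma rpart m r : r <= s -> SS (m * s + r) = SS (m * s) + r * m.
Proof.
elim: r => [|r IH] Hr; first by rewrite addn0 mul0n addn0.
rewrite addnS SS_step IH; last by apply: ltnW.
rewrite divnMDl // divn_small //; lia.
Qed.

Lemma base m : SS (m * s) = s * 'C(m, 2).
Proof.
elim: m => [|m IH]; first by rewrite mul0n /SS big_ord0 bin0n muln0.
rewrite mulSn addnC rpart // IH binS bin1; lia.
Qed.

Lemma SS_formula N : SS N = s * 'C(N %/ s, 2) + (N %% s) * (N %/ s).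
Proof.
rewrite {1}(divn_eq N s) rpart ?base //; exact: ltnW (ltn_pmod _ _).
Qed.

Lemma sum_ind N x : \sum_(d < N) ((0 < d) && (d <= x) : nat) = minn x N.-1.
Proof.
elim: N => [|N IH]; first by rewrite big_ord0; lia.
rewrite big_ord_recr /= IH; case: N {IH} => [|N] /=; first by lia.
case: (leqP N.+1 x) => H /=; lia.
Qed.

Lemma cardZ : #|[set x : 'I_n * 'I_n | (0 < x.2) && (x.2 <= x.1 %/ s)]| = SS n.
Proof.
rewrite -sum1dep_card -(pair_big_dep xpredT (fun (a : 'I_n) (d : 'I_n) => (0 < d) && (d <= a %/ s)) (fun _ _ => 1)) /=.
rewrite /SS; apply: eq_bigr => a _.
rewrite big_mkcond /=.
rewrite (eq_bigr (fun d : 'I_n => ((0 < d) && (d <= a %/ s) : nat))); last by move=> d _; case: ifP.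
rewrite sum_ind.
have : a %/ s <= a := leq_div a s.
have := ltn_ord a; lia.
Qed.

Definition jmax (p : ('I_k.+1 * 'I_n) * ('I_k.+1 * 'I_n)) : 'I_n :=
  if p.1.2 < p.2.2 then p.2.2 else p.1.2.
Definition jmin (p : ('I_k.+1 * 'I_n) * ('I_k.+1 * 'I_n)) : 'I_n :=
  if p.1.2 < p.2.2 then p.1.2 else p.2.2.
Lemma dd_lt p : (jmax p - jmin p) %/ s < n.
Proof. exact: leq_ltn_trans (leq_div _ _) (leq_ltn_trans (leq_subr _ _) (ltn_ord _)). Qed.
Definition gmap p : 'I_n * 'I_n := (jmax p, Ordinal (dd_lt p)).

Lemma diff_dvd p : crosses Dn p.1 p.2 ->
  jmax p - jmin p = ((jmax p - jmin p) %/ s) * s /\ jmin p < jmax p.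
Proof.
case: p => [[a j] [c j']] /= /cross_props [g _ jj _] /=.
have hm : j %% s = j' %% s by have := congr1 val g.
rewrite /jmax /jmin /=; case: ltnP => H.
- split; last exact: H.
  have dv : s %| j' - j by rewrite -eqn_mod_dvd; [rewrite hm | exact: ltnW].
  by rewrite divnK.
- have H' : j' < j by rewrite ltn_neqAle H andbT eq_sym.
  split; last exact: H'.
  have dv : s %| j - j' by rewrite -eqn_mod_dvd; [rewrite hm | exact: H].
  by rewrite divnK.
Qed.

Definition SetS := [set p | crosses Dn p.1 p.2].
Definition SetZ := [set x : 'I_n * 'I_n | (0 < x.2) && (x.2 <= x.1 %/ s)].

Lemma g_sub : gmap @: SetS \subset SetZ.
Proof.
apply/subsetP => x /imsetP [p]; rewrite inE => /diff_dvd [E lt] ->.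
rewrite inE /=; apply/andP; split.
- move: E lt; set t := (_ %/ s); nia.
- exact: leq_div2r (leq_subr _ _).
Qed.

Lemma set_mm p : [set p.1.2; p.2.2] = [set jmin p; jmax p].
Proof. by rewrite /jmin /jmax; case: ifP => _ //; rewrite setUC. Qed.

Lemma g_inj : {in SetS &, injective gmap}.
Proof.
move=> p p'; rewrite !inE => C C' E.
case: E => E1 E2.
have E3 := E2.
have [D lt] := diff_dvd C; have [D' lt'] := diff_dvd C'.
have Em : jmin p = jmin p'.
  apply: val_inj => /=.
  rewrite -(subKn (ltnW lt)) -(subKn (ltnW lt')) D D' E3 E1 //.
have := cross_uniq C C'; rewrite !set_mm Em E1 => /(_ erefl).
by case: p p' {C C' E1 E2 E3 D lt D' lt' Em} => [e f] [e' f'] /= [-> ->].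
Qed.

Lemma crossings_le : crossings Dn <= SS n.
Proof.
rewrite /crossings -/SetS -(card_in_imset g_inj) -cardZ.
exact: subset_leq_card g_sub.
Qed.

End Constr.

Theorem proposition18 (k s n : nat) :
  0 < k -> 0 < s ->
  (exists D : bdrawing k k.+1 s, balanced_embedding D) ->
  s <= n ->
  let q := n %% s in
  exists D : bdrawing k k.+1 n,
    crossings D <= q * 'C((n - q) %/ s + 1, 2) + (s - q) * 'C((n - q) %/ s, 2).
Proof.
move=> k0 s0 [D0 [Hcr Hbal]] sn q.
exists (Dn n s0 Hcr).
apply: leq_trans (crossings_le n s0 Hcr Hbal) _.
rewrite (SS_formula s0 Hcr).
have Hq : n - q = n %/ s * s by rewrite /q {1}(divn_eq n s) addnK.
rewrite Hq mulnK // addn1 binS bin1.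
have H : n %% s <= s by apply: ltnW; exact: ltn_pmod.
by rewrite /q mulnDr addnAC -mulnDl subnKC.
Qed.
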